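(* For any sequence of positive integers $(n_k)_{k\ge1}$ with $n_{k+1}>n_k^2$ for all $k\ge1$, there exists an infinite set $\mathcal{K}\subset\mathbb{N}$ such that $$L\Big(\{m\in\mathbb{N}: m\ge2\}\setminus\bigcup_{k\in\mathcal{K}}\{m\in\mathbb{N}: n_k\le m<n_{k+1}\}\Big)$$ is lineable but not densely lineable.
   Context: $\ell^\infty$ is the Banach space of bounded real sequences with the sup norm. For $x\in\ell^\infty$, $L_x$ denotes the set of accumulation points (subsequential limits) of $x$. For a set $A$ of cardinalities, $L(A)=\{x\in\ell^\infty: |L_x|\in A\}$. A subset $Y$ of $\ell^\infty$ is lineable if $Y\cup\{0\}$ contains an infinite-dimensional linear subspace, and densely lineable if it contains such a subspace which is dense in $\ell^\infty$. *)

(* Defs.v *)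
From Stdlib Require Import Reals Lra Lia List.
Open Scope R_scope.

Definition bounded (x : nat -> R) : Prop :=
  exists M : R, forall k, Rabs (x k) <= M.

Definition acc_points (x : nat -> R) (a : R) : Prop :=
  exists phi : nat -> nat, (forall k, (phi k < phi (S k))%nat) /\
                           Un_cv (fun k => x (phi k)) a.

Definition has_card (S : R -> Prop) (m : nat) : Prop :=
  exists l : list R, NoDup l /\ length l = m /\ (forall a, S a <-> In a l).

(* L(A) for a set A of (finite) cardinalities, A given as a set of naturals. *)
Definition Lset (A : nat -> Prop) (x : nat -> R) : Prop :=
  bounded x /\ exists m, A m /\ has_card (acc_points x) m.

Definition is_subspace (V : (nat -> R) -> Prop) : Prop :=
  (forall x, V x -> bounded x) /\
  V (fun _ => 0) /\
  (forall x y, V x -> V y -> V (fun k => x k + y k)) /\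
  (forall (c : R) x, V x -> V (fun k => c * x k)).

Fixpoint lincomb (n : nat) (c : nat -> R) (f : nat -> nat -> R) (k : nat) : R :=
  match n with
  | O => 0
  | S n' => lincomb n' c f k + c n' * f n' k
  end.

Definition inf_dim (V : (nat -> R) -> Prop) : Prop :=
  forall n : nat, exists f : nat -> nat -> R,
    (forall i, (i < n)%nat -> V (f i)) /\
    (forall c : nat -> R, (forall k, lincomb n c f k = 0) ->
       forall i, (i < n)%nat -> c i = 0).

Definition dense_linf (V : (nat -> R) -> Prop) : Prop :=
  forall x, bounded x -> forall eps, 0 < eps ->
    exists v, V v /\ forall k, Rabs (x k - v k) <= eps.

Definition lineable (Y : (nat -> R) -> Prop) : Prop :=
  exists V, is_subspace V /\ inf_dim V /\
    (forall x, V x -> Y x \/ (forall k, x k = 0)).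

Definition densely_lineable (Y : (nat -> R) -> Prop) : Prop :=
  exists V, is_subspace V /\ inf_dim V /\ dense_linf V /\
    (forall x, V x -> Y x \/ (forall k, x k = 0)).

(* Main.v *)
Require Import Defs.
From Stdlib Require Import Reals Lra Lia List ClassicalEpsilon Classical FunctionalExtensionality Cantor.
Open Scope R_scope.


Lemma mychoice {A B : Type} (R : A -> B -> Prop) :
  (forall x, exists y, R x y) -> exists f : A -> B, forall x, R x (f x).
Proof.
  intros H. exists (fun x => proj1_sig (constructive_indefinite_description _ (H x))).
  intro x. exact (proj2_sig (constructive_indefinite_description _ (H x))).
Qed.

Lemma Rabs_le_inv x M : Rabs x <= M -> -M <= x <= M.
Proof. unfold Rabs; destruct (Rcase_abs x); lra. Qed.

Definition incr (f : nat -> nat) := forall k, (f k < f (S k))%nat.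

Lemma incr_mono f : incr f -> forall a b, (a < b)%nat -> (f a < f b)%nat.
Proof.
  intros H a b Hab. induction Hab.
  - apply H.
  - specialize (H m). lia.
Qed.

Lemma incr_ge f : incr f -> forall k, (k <= f k)%nat.
Proof.
  intros H k. induction k. lia. specialize (H k). lia.
Qed.

Lemma incr_comp f g : incr f -> incr g -> incr (fun k => f (g k)).
Proof.
  intros Hf Hg k. apply incr_mono; auto.
Qed.

Lemma sub_cv u l s : Un_cv u l -> incr s -> Un_cv (fun k => u (s k)) l.
Proof.
  intros H Hs eps He. destruct (H eps He) as [N HN]. exists N.
  intros k Hk. apply HN. pose proof (incr_ge s Hs k). unfold ge in *. lia.
Qed.

Lemma mono_sub (u : nat -> R) : exists s, incr s /\
  ((forall k, u (s k) <= u (s (S k))) \/ (forall k, u (s (S k)) <= u (s k))).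
Proof.
  set (peak := fun n => forall m, (n < m)%nat -> u m <= u n).
  destruct (classic (forall N, exists n, (N <= n)%nat /\ peak n)) as [HA|HB].
  - destruct (mychoice _ HA) as [P HP].
    set (s := fix s k := match k with O => P O | S k' => P (S (s k')) end).
    exists s. assert (Hi : incr s).
    { intro k. simpl. destruct (HP (S (s k))). lia. }
    split; auto. right. intro k. simpl.
    destruct (HP (S (s k))) as [H1 _].
    assert (Hpk : peak (s k)) by (destruct k; simpl; apply HP).
    apply Hpk. lia.
  - apply not_all_ex_not in HB. destruct HB as [N HN].
    assert (HQ : forall n, exists m, (N <= n)%nat -> (n < m)%nat /\ u n < u m).
    { intro n. destruct (Compare_dec.le_lt_dec N n) as [Hle|Hlt].
      - destruct (classic (peak n)) as [Hp|Hp].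
        + exfalso. apply HN. exists n. auto.
        + unfold peak in Hp. apply not_all_ex_not in Hp. destruct Hp as [m Hm].
          exists m. intros _. apply imply_to_and in Hm. destruct Hm. split; auto. lra.
      - exists O. intros. lia. }
    destruct (mychoice _ HQ) as [Q HQ'].
    set (s := fix s k := match k with O => N | S k' => Q (s k') end).
    assert (HN' : forall k, (N <= s k)%nat).
    { induction k; simpl. lia. destruct (HQ' (s k) IHk). lia. }
    exists s. split.
    + intro k. simpl. destruct (HQ' (s k) (HN' k)). auto.
    + left. intro k. simpl. destruct (HQ' (s k) (HN' k)). lra.
Qed.

Lemma BW (u : nat -> R) : Defs.bounded u -> exists s l, incr s /\ Un_cv (fun k => u (s k)) l.
Proof.
  intros [M HM]. destruct (mono_sub u) as [s [Hs [Hg|Hd]]].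
  - destruct (growing_cv (fun k => u (s k))) as [l Hl].
    + intro k. apply Hg.
    + exists M. intros x [i ->]. specialize (HM (s i)). apply Rabs_le_inv in HM. lra.
    + exists s, l. auto.
  - destruct (decreasing_cv (fun k => u (s k))) as [l Hl].
    + intro k. apply Hd.
    + exists M. intros x [i ->]. unfold opp_seq. specialize (HM (s i)).
      apply Rabs_le_inv in HM. lra.
    + exists s, l. auto.
Qed.

Lemma lim_le u l a e : Un_cv u l -> (exists N, forall k, (N <= k)%nat -> Rabs (u k - a) <= e) ->
  Rabs (l - a) <= e.
Proof.
  intros H [N HN]. destruct (Rle_or_lt (Rabs (l - a)) e) as [|Hlt]; auto.
  exfalso. destruct (H (Rabs (l - a) - e)) as [N' HN']. lra.
  specialize (HN' (max N N') (Nat.le_max_r N N')). specialize (HN (max N N') (Nat.le_max_l N N')).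
  unfold Rdist in HN'.
  pose proof (Rabs_triang (l - u (max N N')) (u (max N N') - a)).
  replace (l - u (max N N') + (u (max N N') - a)) with (l - a) in H0 by ring.
  pose proof (Rabs_minus_sym l (u (max N N'))). pose proof (Rabs_minus_sym a l). lra.
Qed.

Lemma sep_point (L : list R) (a : R) : exists d, 0 < d /\
  forall x, In x L -> x <> a -> d <= Rabs (x - a).
Proof.
  induction L as [|y L IH].
  - exists 1. split. lra. intros x [].
  - destruct IH as [d [Hd H]].
    destruct (Req_dec y a) as [->|Hy].
    + exists d. split; auto. intros x [->|Hx] Hxa. contradiction. auto.
    + exists (Rmin d (Rabs (y - a))). split.
      * apply Rmin_pos; auto. apply Rabs_pos_lt. lra.
      * intros x [->|Hx] Hxa. apply Rmin_r. eapply Rle_trans. apply Rmin_l. auto.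
Qed.

Lemma sep (L : list R) : exists d, 0 < d /\
  forall a b, In a L -> In b L -> a <> b -> d <= Rabs (a - b).
Proof.
  induction L as [|y L IH].
  - exists 1. split. lra. intros a b [].
  - destruct IH as [d [Hd H]]. destruct (sep_point L y) as [e [He He']].
    exists (Rmin d e). split. apply Rmin_pos; auto.
    intros a b Ha Hb Hab. destruct Ha as [<-|Ha]; destruct Hb as [<-|Hb].
    + contradiction.
    + rewrite Rabs_minus_sym. eapply Rle_trans. apply Rmin_r. apply He'; auto.
    + eapply Rle_trans. apply Rmin_r. apply He'; auto.
    + eapply Rle_trans. apply Rmin_l. auto.
Qed.

Lemma cv_in_list (u : nat -> R) L a : (forall k, In (u k) L) -> Un_cv u a -> In a L.
Proof.
  intros HL Hc. destruct (classic (In a L)) as [|Hn]; auto. exfalso.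
  destruct (sep_point L a) as [d [Hd H]]. destruct (Hc d Hd) as [N HN].
  specialize (HN N (le_n N)). unfold Rdist in HN.
  assert (u N <> a) by (intro E; apply Hn; rewrite <- E; auto).
  specialize (H _ (HL N) H0). lra.
Qed.

Lemma has_card_le S m L : has_card S m -> (forall a, S a -> In a L) -> (m <= length L)%nat.
Proof.
  intros [l [Hn [Hl HS]]] H. subst m. apply NoDup_incl_length; auto.
  intros a Ha. apply H. apply HS. auto.
Qed.

Lemma has_card_ge S m L : has_card S m -> NoDup L -> (forall a, In a L -> S a) ->
  (length L <= m)%nat.
Proof.
  intros [l [Hn [Hl HS]]] HL H. subst m. apply NoDup_incl_length; auto.
  intros a Ha. apply HS. auto.
Qed.

Lemma finite_has_card (P : R -> Prop) L : (forall a, P a -> In a L) ->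
  exists m, has_card P m /\ (m <= length L)%nat.
Proof.
  revert P. induction L as [|x L IH]; intros P H.
  - exists O. split; [|simpl; lia]. exists nil. split; [constructor|]. split; [reflexivity|].
    intro a; split; [intro Ha; exact (H a Ha) | intros []].
  - destruct (IH (fun a => P a /\ a <> x)) as [m [[l [Hn [Hl HS]]] Hm]].
    { intros a [Ha Hax]. destruct (H a Ha) as [->|]; tauto. }
    destruct (classic (P x)) as [Hx|Hx].
    + exists (Datatypes.S m). split; [|simpl; lia]. exists (x :: l). split; [|split].
      * constructor; auto. intro Hi. apply HS in Hi. tauto.
      * simpl; lia.
      * intro a; split.
        -- intro Ha. destruct (Req_dec a x) as [->|]. left; auto. right. apply HS. auto.
        -- intros [<-|Hi]; auto. apply HS in Hi. tauto.
    + exists m. split; [|simpl; lia]. exists l. split; [auto|split; auto].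
      intro a; split.
      * intro Ha. apply HS. split; auto. intro; subst; tauto.
      * intro Hi. apply HS in Hi. tauto.
Qed.

Lemma has_card_unique S m m' : has_card S m -> has_card S m' -> m = m'.
Proof.
  intros H1 H2. destruct H1 as [l [Hn [Hl HS]]].
  apply Nat.le_antisymm.
  - subst. eapply has_card_ge; eauto. intros; apply HS; auto.
  - rewrite <- Hl. eapply has_card_le; eauto. intros. apply HS; auto.
Qed.

Lemma cv_const c : Un_cv (fun _ => c) c.
Proof. intros e He. exists O. intros. unfold Rdist. rewrite Rminus_diag, Rabs_R0. auto. Qed.

Lemma acc_sum (w v : nat -> R) t a : Defs.bounded w -> t <> 0 ->
  acc_points (fun k => w k + t * v k) a ->
  exists p z, acc_points w p /\ acc_points v z /\ a = p + t * z.
Proof.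
  intros Hb Ht [phi [Hphi Hc]].
  destruct (BW (fun k => w (phi k))) as [s [l [Hs Hl]]].
  { destruct Hb as [M HM]. exists M. intro; apply HM. }
  exists l, ((a - l) / t). split; [|split].
  - exists (fun k => phi (s k)). split; auto. apply incr_comp; auto.
  - exists (fun k => phi (s k)). split. apply incr_comp; auto.
    assert (H := sub_cv _ _ _ Hc Hs). simpl in H.
    assert (H2 := CV_minus _ _ _ _ H Hl).
    assert (H3 := CV_mult _ _ _ _ H2 (cv_const (/ t))).
    simpl in H3. unfold Rdiv.
    intros e He. destruct (H3 e He) as [N HN]. exists N. intros k Hk.
    specialize (HN k Hk). replace (v (phi (s k))) with ((w (phi (s k)) + t * v (phi (s k)) - w (phi (s k))) * / t). auto.
    field. auto.
  - field. auto.
Qed.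

Fixpoint prodlist (t : R) (L1 L2 : list R) : list R :=
  match L1 with nil => nil | p :: L => map (fun z => p + t * z) L2 ++ prodlist t L L2 end.

Lemma prodlist_len t L1 L2 : length (prodlist t L1 L2) = (length L1 * length L2)%nat.
Proof. induction L1; simpl; auto. rewrite length_app, length_map, IHL1. lia. Qed.

Lemma prodlist_in t L1 L2 p z : In p L1 -> In z L2 -> In (p + t * z) (prodlist t L1 L2).
Proof.
  induction L1; simpl. tauto. intros [->|H] Hz; apply in_or_app.
  left. apply in_map_iff. eauto. right; auto.
Qed.

Lemma card_sum w v t cw cv m : Defs.bounded w -> t <> 0 ->
  has_card (acc_points w) cw -> has_card (acc_points v) cv ->
  has_card (acc_points (fun k => w k + t * v k)) m -> (m <= cw * cv)%nat.
Proof.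
  intros Hb Ht [lw [_ [Hw Sw]]] [lv [_ [Hv Sv]]] Hm.
  subst. rewrite <- prodlist_len with (t := t). eapply has_card_le; eauto.
  intros a Ha. destruct (acc_sum w v t a Hb Ht Ha) as [p [z [Hp [Hz ->]]]].
  apply prodlist_in. apply Sw; auto. apply Sv; auto.
Qed.


Lemma acc_zero : has_card (acc_points (fun _ => 0)) 1.
Proof.
  exists (0 :: nil). split. constructor. intros []. constructor. split. auto.
  intro a. split.
  - intros [phi [_ Hc]]. left. eapply UL_sequence. apply cv_const. exact Hc.
  - intros [<-|[]]. exists (fun k => k). split. intro; lia. apply cv_const.
Qed.

Lemma acc_zero_seq x a : (forall k, x k = 0) -> acc_points x a -> a = 0.
Proof.
  intros H [phi [_ Hc]]. eapply UL_sequence. exact Hc.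
  intros e He. exists O. intros. unfold Rdist. rewrite H, Rminus_diag, Rabs_R0. auto.
Qed.

Fixpoint code (b : nat -> bool) (m : nat) : nat :=
  match m with O => O | S m' => (2 * code b m' + 1 + (if b m' then 1 else 0))%nat end.

Lemma code_incr b : incr (code b).
Proof. intro k. simpl. destruct (b k); lia. Qed.

Lemma code_inj b b' m : forall m', code b m = code b' m' -> m = m' /\ forall j, (j < m)%nat -> b j = b' j.
Proof.
  induction m as [|m IH]; intros [|m'] H; simpl in H.
  - split; auto. intros; lia.
  - destruct (b' m'); lia.
  - destruct (b m); lia.
  - assert (E : code b m = code b' m' /\ b m = b' m').
    { destruct (b m), (b' m'); split; auto; lia. }
    destruct E as [E1 E2]. destruct (IH m' E1) as [-> Hj]. split; auto.
    intros j Hj'. destruct (Nat.eq_dec j m') as [->|]; auto. apply Hj. lia.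
Qed.

Lemma code_apart b b' : b <> b' -> exists J, forall m m', (J <= m)%nat -> code b m <> code b' m'.
Proof.
  intros Hne. assert (exists j, b j <> b' j) as [j Hj].
  { apply NNPP. intro H. apply Hne. apply functional_extensionality. intro x.
    apply NNPP. intro. apply H. eauto. }
  exists (S j). intros m m' Hm E. apply code_inj in E. destruct E as [_ E]. apply Hj, E. lia.
Qed.

Definition target (b : nat -> bool) (j : nat) : R :=
  if excluded_middle_informative (exists m, code b m = j) then 1 else 0.

Lemma target_in b m : target b (code b m) = 1.
Proof. unfold target. destruct excluded_middle_informative as [|n]; auto. exfalso; eauto. Qed.

Lemma target_out b b' : b <> b' -> exists J, forall s, (J <= s)%nat -> target b' (code b s) = 0.
Proof.
  intro H. destruct (code_apart b b' H) as [J HJ]. exists J. intros s Hs. unfold target.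
  destruct excluded_middle_informative as [[m' Hm]|]; auto. exfalso. eapply HJ; eauto.
Qed.

Lemma fiber_list (cnt : (nat -> bool) -> nat) c N :
  ~ (exists l, NoDup l /\ length l = N /\ forall b, In b l -> cnt b = c) ->
  exists L, forall b, cnt b = c -> In b L.
Proof.
  intros HN.
  assert (Hstep : forall n, (exists L, forall b, cnt b = c -> In b L) \/
     (exists l, NoDup l /\ length l = n /\ forall b, In b l -> cnt b = c)).
  { induction n as [|n [IH|[l [Hl1 [Hl2 Hl3]]]]].
    - right. exists nil. split. constructor. split; auto. intros b [].
    - left; auto.
    - destruct (classic (forall b, cnt b = c -> In b l)) as [Hall|Hnot].
      + left; eauto.
      + right. apply not_all_ex_not in Hnot. destruct Hnot as [b Hb].
        apply imply_to_and in Hb. destruct Hb as [Hb1 Hb2].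
        exists (b :: l). split. constructor; auto. split. simpl; lia.
        intros b' [<-|Hb']; auto. }
  destruct (Hstep N) as [|H]; auto. contradiction.
Qed.

Lemma pigeon (cnt : (nat -> bool) -> nat) : exists c, forall N,
  exists l, NoDup l /\ length l = N /\ forall b, In b l -> cnt b = c.
Proof.
  apply NNPP. intro H.
  assert (HL : forall c, exists L, forall b, cnt b = c -> In b L).
  { intro c. apply NNPP. intro Hc. apply H. exists c. intro N.
    apply NNPP. intro HN. apply Hc. eapply fiber_list; eauto. }
  destruct (mychoice _ HL) as [Lf HLf].
  set (d := fun n => let (c, i) := of_nat n in negb (nth i (Lf c) (fun _ => true) n)).
  destruct (In_nth _ _ (fun _ => true) (HLf (cnt d) d eq_refl)) as [i [_ Hi]].
  assert (E : d (to_nat (cnt d, i)) = negb (d (to_nat (cnt d, i)))).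
  { unfold d at 1. rewrite cancel_of_to. rewrite Hi. reflexivity. }
  destruct (d (to_nat (cnt d, i))); discriminate.
Qed.

Lemma realize_acc w b s y : incr s -> Un_cv (fun k => w (code b (s k))) y -> acc_points w y.
Proof.
  intros Hs Hc. exists (fun k => code b (s k)). split; auto.
  apply incr_comp; auto. apply code_incr.
Qed.

Lemma bounded_sub (u : nat -> R) (f : nat -> nat) : Defs.bounded u -> Defs.bounded (fun k => u (f k)).
Proof. intros [M HM]. exists M. intro; apply HM. Qed.

Section ND.
Variable A : nat -> Prop.
Variable V : (nat -> R) -> Prop.
Hypothesis HV : is_subspace V.
Hypothesis HVA : forall x, V x -> Lset A x \/ (forall k, x k = 0).
Variable lo hi : nat.
Hypothesis Hlo1 : (1 < lo)%nat.
Hypothesis Hlohi : (lo * lo < hi)%nat.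
Hypothesis Hgap : forall m, (lo <= m < hi)%nat -> ~ A m.
Variable c : nat.
Hypothesis Hc : (c < lo)%nat.
Variable B : nat -> (nat -> bool).
Hypothesis HBd : forall i j, (i < lo)%nat -> (j < lo)%nat -> i <> j -> B i <> B j.
Variable vb : (nat -> bool) -> (nat -> R).
Hypothesis Hvb : forall b, V (vb b) /\ forall k, Rabs (target b k - vb b k) <= 1/4.
Hypothesis Hcnt : forall i, (i < lo)%nat -> has_card (acc_points (vb (B i))) c.

Lemma Vbd x : V x -> Defs.bounded x.
Proof. destruct HV as [H _]. apply H. Qed.

Definition Inv (m : nat) := exists w cw ys, V w /\ has_card (acc_points w) cw /\ (cw < lo)%nat /\
  NoDup ys /\ length ys = m /\ forall y, In y ys -> exists i s, (i < m)%nat /\ incr s /\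
    Un_cv (fun k => w (code (B i) (s k))) y.

Lemma Inv0 : Inv O.
Proof.
  exists (fun _ => 0), 1%nat, nil. destruct HV as [_ [H0 _]].
  split; auto. split. apply acc_zero. split. lia. split. constructor. split; auto.
  intros y [].
Qed.

Lemma count_w' w cw t v : V w -> V v -> has_card (acc_points w) cw -> (cw < lo)%nat ->
  has_card (acc_points v) c -> t <> 0 ->
  exists cw', has_card (acc_points (fun k => w k + t * v k)) cw' /\ (cw' < lo)%nat.
Proof.
  intros Vw Vv Hw Hcw Hv Ht.
  assert (Vw' : V (fun k => w k + t * v k)).
  { destruct HV as [_ [_ [Hp Hs]]]. apply Hp; auto. }
  destruct (HVA _ Vw') as [[_ [m [Am Hm]]]|Hz].
  - exists m. split; auto.
    pose proof (card_sum w v t cw c m (Vbd w Vw) Ht Hw Hv Hm).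
    destruct (Compare_dec.le_lt_dec lo m) as [Hle|]; auto. exfalso.
    apply (Hgap m); auto. split; auto.
    assert (cw * c <= cw * lo)%nat by (apply Nat.mul_le_mono_l; lia).
    assert (cw * lo < lo * lo)%nat by (apply Nat.mul_lt_mono_pos_r; lia). lia.
  - exists 1%nat. split; [|lia].
    replace (fun k => w k + t * v k) with (fun _ : nat => 0). apply acc_zero.
    apply functional_extensionality. intro k. rewrite Hz. auto.
Qed.

Lemma InvS m : (S m <= lo)%nat -> Inv m -> Inv (S m).
Proof.
  intros Hm [w [cw [ys [Vw [Hw [Hcw [Hnd [Hlen Hys]]]]]]]].
  set (v := vb (B m)).
  destruct (Hvb (B m)) as [Vv Hv]. fold v in Vv, Hv.
  assert (Bv := Vbd v Vv). assert (Bw := Vbd w Vw).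
  assert (H1 : forall y, exists z, In y ys -> Rabs z <= 1/4 /\ exists i s, (i < m)%nat /\ incr s /\
    Un_cv (fun k => w (code (B i) (s k))) y /\ Un_cv (fun k => v (code (B i) (s k))) z).
  { intro y. destruct (classic (In y ys)) as [Hy|Hy]; [|exists 0; tauto].
    destruct (Hys y Hy) as [i [s [Him [Hs Hcv]]]].
    destruct (BW _ (bounded_sub v (fun k => code (B i) (s k)) Bv)) as [tau [z [Ht Hz]]].
    exists z. intros _. split.
    - replace z with (z - 0) by ring. apply (lim_le _ _ _ _ Hz).
      assert (Hne : B i <> B m) by (apply HBd; lia).
      destruct (target_out _ _ Hne) as [J HJ]. exists J. intros k Hk.
      rewrite <- (HJ (s (tau k))). rewrite Rabs_minus_sym. apply Hv.
      pose proof (incr_ge _ Ht k). pose proof (incr_ge _ Hs (tau k)). lia.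
    - exists i, (fun k => s (tau k)). split; auto. split. apply incr_comp; auto.
      split; auto. apply (sub_cv _ _ _ Hcv Ht). }
  destruct (mychoice _ H1) as [Z HZ].
  destruct (BW _ (bounded_sub w (code (B m)) Bw)) as [t1 [y' [Ht1 Hy']]].
  destruct (BW _ (bounded_sub v (fun k => code (B m) (t1 k)) Bv)) as [t2 [z' [Ht2 Hz']]].
  assert (Hz'1 : Rabs (z' - 1) <= 1/4).
  { apply (lim_le _ _ _ _ Hz'). exists O. intros k _. pose proof (Hv (code (B m) (t1 (t2 k)))) as Hk.
    rewrite target_in in Hk. rewrite Rabs_minus_sym. exact Hk. }
  destruct (sep (y' :: ys)) as [d [Hd Hsep]].
  set (t := d / 4).
  assert (Htp : 0 < t) by (unfold t; lra).
  destruct (count_w' w cw t v Vw Vv Hw Hcw (Hcnt m ltac:(lia)) ltac:(lra)) as [cw' [Hw' Hcw']].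
  exists (fun k => w k + t * v k), cw', ((y' + t * z') :: map (fun y => y + t * Z y) ys).
  split. { destruct HV as [_ [_ [Hp Hs]]]. apply Hp; auto. }
  split; auto. split; auto.
  assert (HZb : forall y, In y ys -> Rabs (Z y) <= 1/4) by (intros y Hy; apply (HZ y Hy)).
  split; [|split].
  - constructor.
    + intro Hin. apply in_map_iff in Hin. destruct Hin as [y [Ey Hy]].
      pose proof (HZb y Hy) as Hzy. apply Rabs_le_inv in Hzy. apply Rabs_le_inv in Hz'1.
      destruct (Req_dec y' y) as [<-|Hne].
      * assert (t * (z' - Z y') = 0) by lra.
        apply Rmult_integral in H. destruct H; lra.
      * assert (Hs := Hsep y' y (or_introl eq_refl) (or_intror Hy) Hne).
        assert (y' - y = t * (Z y - z')) by lra. rewrite H in Hs.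
        rewrite Rabs_mult, Rabs_right in Hs by lra.
        assert (Rabs (Z y - z') <= 3/2). { apply Rabs_le. lra. }
        unfold t in Hs. nra.
    + apply NoDup_map_NoDup_ForallPairs; auto.
      intros a b Ha Hb E. apply NNPP. intro Hne.
      assert (Hs := Hsep a b (or_intror Ha) (or_intror Hb) Hne).
      pose proof (HZb a Ha) as Za. pose proof (HZb b Hb) as Zb.
      apply Rabs_le_inv in Za. apply Rabs_le_inv in Zb.
      assert (a - b = t * (Z b - Z a)) by lra. rewrite H in Hs.
      rewrite Rabs_mult, Rabs_right in Hs by lra.
      assert (Rabs (Z b - Z a) <= 1/2). { apply Rabs_le. lra. }
      unfold t in Hs. nra.
  - simpl. rewrite length_map. auto.
  - intros y [<-|Hin].
    + exists m, (fun k => t1 (t2 k)). split. lia. split. apply incr_comp; auto.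
      apply CV_plus. apply (sub_cv _ _ _ Hy' Ht2).
      apply CV_mult. apply cv_const. auto.
    + apply in_map_iff in Hin. destruct Hin as [y0 [<- Hy0]].
      destruct (HZ y0 Hy0) as [_ [i [s [Hi [Hs [Hcw0 Hcv0]]]]]].
      exists i, s. split. lia. split; auto.
      apply CV_plus. auto. apply CV_mult. apply cv_const. auto.
Qed.

Lemma Inv_all : forall m, (m <= lo)%nat -> Inv m.
Proof.
  induction m. intros; apply Inv0. intros H. apply InvS; auto. apply IHm. lia.
Qed.

Lemma nd_false : False.
Proof.
  destruct (Inv_all lo (le_n _)) as [w [cw [ys [Vw [Hw [Hcw [Hnd [Hlen Hys]]]]]]]].
  assert (lo <= cw)%nat.
  { rewrite <- Hlen. eapply has_card_ge; eauto. intros y Hy.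
    destruct (Hys y Hy) as [i [s [_ [Hs Hcv]]]]. eapply realize_acc; eauto. }
  lia.
Qed.
End ND.

Lemma not_dense (A : nat -> Prop)
  (H : forall c, exists lo hi, (c < lo)%nat /\ (1 < lo)%nat /\ (lo * lo < hi)%nat /\
        forall m, (lo <= m < hi)%nat -> ~ A m) :
  ~ densely_lineable (Lset A).
Proof.
  intros [V [HV [_ [Hd HVA]]]].
  assert (H1 : forall b, exists v, V v /\ forall k, Rabs (target b k - v k) <= 1/4).
  { intro b. apply Hd. exists 1. intro k. unfold target.
    destruct excluded_middle_informative; rewrite ?Rabs_R1, ?Rabs_R0; lra. lra. }
  destruct (mychoice _ H1) as [vb Hvb].
  assert (H2 : forall b, exists m, has_card (acc_points (vb b)) m).
  { intro b. destruct (HVA (vb b) (proj1 (Hvb b))) as [[_ [m [_ Hm]]]|Hz]; eauto.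
    exfalso. pose proof (proj2 (Hvb b) (code b 0)) as Hk. rewrite target_in, Hz in Hk.
    rewrite Rminus_0_r, Rabs_R1 in Hk. lra. }
  destruct (mychoice _ H2) as [cnt Hcnt].
  destruct (pigeon cnt) as [c Hc].
  destruct (H c) as [lo [hi [Hclo [Hlo1 [Hlohi Hgap]]]]].
  destruct (Hc lo) as [bs [Hnd [Hlen Hbs]]].
  set (B := fun i => nth i bs (fun _ => true)).
  apply (nd_false A V HV HVA lo hi Hlo1 Hlohi Hgap c Hclo B) with (vb := vb); auto.
  - intros i j Hi Hj Hij E. apply Hij. eapply NoDup_nth; eauto; rewrite Hlen; auto.
  - intros i Hi. rewrite <- (Hbs (B i)). apply Hcnt. apply nth_In. lia.
Qed.

Lemma to_nat_strict x y : (to_nat (x, y) < to_nat (x, S y))%nat.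
Proof. pose proof (to_nat_spec x y). pose proof (to_nat_spec x (S y)). nia. Qed.

Lemma to_nat_mono x y y' : (y < y')%nat -> (to_nat (x, y) < to_nat (x, y'))%nat.
Proof. intro H. pose proof (to_nat_spec x y). pose proof (to_nat_spec x y'). nia. Qed.

Lemma to_nat_incr_lin p r m : (0 < m)%nat -> incr (fun s => to_nat (p, r + s * m)%nat).
Proof. intros Hm s. apply to_nat_mono. simpl. lia. Qed.

Fixpoint sumR (N : nat) (g : nat -> R) : R :=
  match N with O => 0 | S N' => sumR N' g + g N' end.

Lemma sumR_ge N g : (forall i, 0 <= g i) -> forall a, (a < N)%nat -> g a <= sumR N g.
Proof.
  intros Hg. induction N; intros a Ha. lia. simpl.
  assert (0 <= sumR N g). { clear IHN Ha. induction N; simpl. lra. pose proof (Hg N). lra. }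
  destruct (Nat.eq_dec a N) as [->|]. lra. pose proof (IHN a ltac:(lia)). pose proof (Hg N). lra.
Qed.

Fixpoint sumN (N : nat) (g : nat -> nat) : nat :=
  match N with O => O | S N' => (sumN N' g + g N')%nat end.

Section LIN.
Variable M : nat -> nat.
Hypothesis HM : forall i, (0 < M i)%nat.

Definition fM (i j : nat) : R :=
  let (a, l) := of_nat j in if Nat.eqb a i then INR (S (l mod M i)) else 0.

Lemma lincomb_formula N c j : lincomb N c fM j =
  let (a, l) := of_nat j in if Nat.ltb a N then c a * INR (S (l mod M a)) else 0.
Proof.
  induction N; cbn [lincomb].
  - destruct (of_nat j); auto.
  - rewrite IHN. unfold fM. destruct (of_nat j) as [a l].
    destruct (Nat.ltb_spec a N); destruct (Nat.ltb_spec a (S N)); destruct (Nat.eqb_spec a N);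
      subst; try lia; ring.
Qed.

Lemma lincomb_at N c a l : lincomb N c fM (to_nat (a, l)) =
  if Nat.ltb a N then c a * INR (S (l mod M a)) else 0.
Proof. rewrite lincomb_formula, cancel_of_to. auto. Qed.

Definition Vlin (x : nat -> R) := exists N c, forall k, x k = lincomb N c fM k.

Lemma Vlin_sub : is_subspace Vlin.
Proof.
  split; [|split; [|split]].
  - intros x [N [c Hx]]. exists (sumR N (fun i => Rabs (c i) * INR (M i))).
    intro k. rewrite Hx, lincomb_formula. destruct (of_nat k) as [a l].
    destruct (Nat.ltb_spec a N).
    + rewrite Rabs_mult, (Rabs_right (INR _)) by (apply Rle_ge, pos_INR).
      apply Rle_trans with (Rabs (c a) * INR (M a)).
      * apply Rmult_le_compat_l. apply Rabs_pos. apply le_INR.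
        pose proof (Nat.mod_upper_bound l (M a) ltac:(pose proof (HM a); lia)). lia.
      * apply (sumR_ge N (fun i => Rabs (c i) * INR (M i))); auto.
        intro i. apply Rmult_le_pos. apply Rabs_pos. apply pos_INR.
    + rewrite Rabs_R0. clear Hx. induction N; simpl. lra.
      assert (0 <= Rabs (c N) * INR (M N)) by (apply Rmult_le_pos; [apply Rabs_pos|apply pos_INR]).
      specialize (IHN ltac:(lia)). lra.
  - exists O, (fun _ => 0). intro; reflexivity.
  - intros x y [N [c Hx]] [N' [c' Hy]].
    exists (N + N')%nat, (fun i => (if Nat.ltb i N then c i else 0) + (if Nat.ltb i N' then c' i else 0)).
    intro k. rewrite Hx, Hy, !lincomb_formula. destruct (of_nat k) as [a l].
    destruct (Nat.ltb_spec a N); destruct (Nat.ltb_spec a N'); destruct (Nat.ltb_spec a (N + N'));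
      try lia; ring.
  - intros r x [N [c Hx]]. exists N, (fun i => r * c i). intro k.
    rewrite Hx, !lincomb_formula. destruct (of_nat k) as [a l].
    destruct (Nat.ltb_spec a N); ring.
Qed.

Lemma Vlin_inf : inf_dim Vlin.
Proof.
  intro n0. exists fM. split.
  - intros i _. exists (S i), (fun j => if Nat.eqb j i then 1 else 0). intro k.
    rewrite lincomb_formula. unfold fM. destruct (of_nat k) as [a l].
    destruct (Nat.eqb_spec a i); destruct (Nat.ltb_spec a (S i)); subst; try lia; try ring.
  - intros c Hc i Hi. specialize (Hc (to_nat (i, O))). rewrite lincomb_at in Hc.
    destruct (Nat.ltb_spec i n0); try lia. rewrite Nat.Div0.mod_0_l in Hc. simpl in Hc. lra.
Qed.

Fixpoint Fl (c : nat -> R) (q : nat) : list R :=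
  match q with O => nil | S q' => Fl c q' ++ map (fun r => c q' * INR (S r)) (seq 0 (M q')) end.

Lemma Fl_len c q : length (Fl c q) = sumN q M.
Proof. induction q; simpl; auto. rewrite length_app, length_map, length_seq. lia. Qed.

Lemma Fl_in c q a r : (a < q)%nat -> (r < M a)%nat -> In (c a * INR (S r)) (Fl c q).
Proof.
  induction q; intros Ha Hr. lia. simpl. apply in_or_app.
  destruct (Nat.eq_dec a q) as [->|]. right. apply in_map_iff. exists r. split; auto.
  apply in_seq. lia. left. apply IHq; auto. lia.
Qed.

Lemma count_lin N c p : (p < N)%nat -> c p <> 0 -> (forall i, (p < i < N)%nat -> c i = 0) ->
  exists m, has_card (acc_points (lincomb N c fM)) m /\ (S (M p) <= m)%nat /\ (m <= S (sumN (S p) M))%nat.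
Proof.
  intros HpN Hcp Htop.
  set (F := 0 :: Fl c (S p)).
  assert (HF : forall k, In (lincomb N c fM k) F).
  { intro k. rewrite lincomb_formula. destruct (of_nat k) as [a l].
    destruct (Nat.ltb_spec a N).
    - destruct (Compare_dec.le_lt_dec a p).
      + right. apply Fl_in. lia. apply Nat.mod_upper_bound. pose proof (HM a); lia.
      + rewrite Htop by lia. left. ring.
    - left; auto. }
  destruct (finite_has_card (acc_points (lincomb N c fM)) F) as [m [Hm Hle]].
  { intros a [phi [_ Hc]]. eapply cv_in_list; [|exact Hc]. intro k. apply HF. }
  exists m. split; auto. split.
  - set (G := 0 :: map (fun r => c p * INR (S r)) (seq 0 (M p))).
    replace (S (M p)) with (length G) by (unfold G; simpl; rewrite length_map, length_seq; auto).
    eapply has_card_ge; eauto.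
    + constructor.
      * intro Hin. apply in_map_iff in Hin. destruct Hin as [r [Er _]].
        apply Rmult_integral in Er. destruct Er as [|E]; auto. apply (not_0_INR (S r)); auto.
      * apply NoDup_map_NoDup_ForallPairs. intros r r' _ _ E.
        apply Rmult_eq_reg_l in E; auto. apply INR_eq in E. lia. apply seq_NoDup.
    + intros a [<-|Hin].
      * exists (fun s => to_nat (N, s)). split. intro; apply to_nat_strict.
        intros e He. exists O. intros k _. rewrite lincomb_at.
        destruct (Nat.ltb_spec N N); try lia. unfold Rdist. rewrite Rminus_diag, Rabs_R0. auto.
      * apply in_map_iff in Hin. destruct Hin as [r [<- Hr]]. apply in_seq in Hr.
        exists (fun s => to_nat (p, (r + s * M p)%nat)). split.
        { apply to_nat_incr_lin. apply HM. }
        intros e He. exists O. intros k _. rewrite lincomb_at.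
        destruct (Nat.ltb_spec p N); try lia. rewrite Nat.Div0.mod_add, Nat.mod_small by lia.
        unfold Rdist. rewrite Rminus_diag, Rabs_R0. auto.
  - unfold F in Hle. simpl in Hle. rewrite length_app, length_map, length_seq, Fl_len in Hle. simpl. lia.
Qed.

End LIN.

Lemma sumN_le q g B : (forall i, (i < q)%nat -> (g i <= B)%nat) -> (sumN q g <= q * B)%nat.
Proof. induction q; simpl; intros H. lia. specialize (IHq ltac:(intros; apply H; lia)). specialize (H q ltac:(lia)). lia. Qed.

Lemma top_coef N (c : nat -> R) : (exists i, (i < N)%nat /\ c i <> 0) ->
  exists p, (p < N)%nat /\ c p <> 0 /\ forall i, (p < i < N)%nat -> c i = 0.
Proof.
  induction N; intros [i [Hi Hc]]. lia.
  destruct (Req_dec (c N) 0) as [HN|HN].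
  - destruct IHN as [p [Hp [Hcp Ht]]]. exists i. split; auto. destruct (Nat.eq_dec i N); subst; try lra. lia.
    exists p. split. lia. split; auto. intros j Hj. destruct (Nat.eq_dec j N); subst; auto. apply Ht; lia.
  - exists N. split. lia. split; auto. intros; lia.
Qed.

Theorem corollary2p9 :
  forall n : nat -> nat,
    (forall k, (1 <= k)%nat -> (0 < n k)%nat) ->
    (forall k, (1 <= k)%nat -> (n k * n k < n (S k))%nat) ->
    exists K : nat -> Prop,
      (forall k, K k -> (1 <= k)%nat) /\
      (forall N, exists k, (N <= k)%nat /\ K k) /\
      let A := fun m : nat =>
        (2 <= m)%nat /\ ~ (exists k, K k /\ (n k <= m)%nat /\ (m < n (S k))%nat) in
      lineable (Lset A) /\ ~ densely_lineable (Lset A).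
Proof.
  intros n Hpos Hsq.
  assert (Hstep : forall k, (1 <= k)%nat -> (n k < n (S k))%nat).
  { intros k Hk. pose proof (Hsq k Hk). pose proof (Hpos k Hk). nia. }
  assert (Hge : forall k, (1 <= k)%nat -> (k <= n k)%nat).
  { induction k; intros Hk. lia. destruct (Nat.eq_dec k 0) as [->|]. pose proof (Hpos 1%nat ltac:(lia)). lia.
    pose proof (IHk ltac:(lia)). pose proof (Hstep k ltac:(lia)). lia. }
  assert (Hmono : forall a b, (1 <= a)%nat -> (a <= b)%nat -> (n a <= n b)%nat).
  { intros a b Ha Hab. induction Hab. lia. pose proof (Hstep m ltac:(lia)). lia. }
  exists (fun k => exists j, k = (2 * j + 1)%nat).
  split. { intros k [j ->]. lia. }
  split. { intro N. exists (2 * N + 1)%nat. split. lia. eauto. }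
  intro A. split.
  - set (M := fun i => n (2 * i + 2)%nat).
    assert (HM : forall i, (0 < M i)%nat) by (intro i; apply Hpos; lia).
    exists (Vlin M). split. apply Vlin_sub; auto. split. apply Vlin_inf; auto.
    intros x [N [c Hx]].
    assert (Ex : x = lincomb N c (fM M)) by (apply functional_extensionality; auto).
    destruct (classic (exists i, (i < N)%nat /\ c i <> 0)) as [Hne|Hz].
    + left. destruct (top_coef N c Hne) as [p [HpN [Hcp Htop]]].
      destruct (count_lin M HM N c p HpN Hcp Htop) as [m [Hm [Hm1 Hm2]]].
      split. { destruct (Vlin_sub M HM) as [Hb _]. apply Hb. exists N, c. auto. }
      exists m. rewrite Ex. split; auto.
      assert (Hs : (sumN (S p) M <= S p * n (2 * p + 2))%nat).
      { apply sumN_le. intros i Hi. unfold M. apply Hmono; lia. }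
      assert (Hg := Hge (2 * p + 2)%nat ltac:(lia)).
      assert (Hq := Hsq (2 * p + 2)%nat ltac:(lia)).
      replace (S (2 * p + 2)) with (2 * p + 3)%nat in Hq by lia.
      unfold M in Hm1.
      split. lia.
      intros [k [[j ->] [Hk1 Hk2]]].
      destruct (Compare_dec.le_lt_dec j p).
      * pose proof (Hmono (S (2 * j + 1)) (2 * p + 2)%nat ltac:(lia) ltac:(lia)). lia.
      * pose proof (Hmono (2 * p + 3)%nat (2 * j + 1)%nat ltac:(lia) ltac:(lia)). nia.
    + right. intro k. rewrite Hx, lincomb_formula. destruct (of_nat k) as [a l].
      destruct (Nat.ltb_spec a N); auto.
      destruct (Req_dec (c a) 0) as [->|]. ring. exfalso; eauto.
  - apply not_dense. intro c.
    exists (n (2 * c + 3)%nat), (n (2 * c + 4)%nat).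
    pose proof (Hge (2 * c + 3)%nat ltac:(lia)).
    split. lia. split. lia. split.
    { replace (2 * c + 4)%nat with (S (2 * c + 3)) by lia. apply Hsq. lia. }
    intros m Hm [_ HA]. apply HA. exists (2 * c + 3)%nat. split. exists (S c). lia.
    replace (S (2 * c + 3)) with (2 * c + 4)%nat by lia. lia.
Qed.
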